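(* Let $N=q_1^{n_1}q_2^{n_2}\cdots q_r^{n_r}$ with primes $q_1<\dots<q_r$ and positive integers $n_i$, and let $\mathbf{s}$ be a Zadoff–Chu sequence of length $N$. Suppose that for some $1\le i\le r$ and integers $a,b$ the polynomial $\pi(x)=x^{q_i}+ax+b\in\mathbb{Z}_N[x]$ permutes $\mathbb{Z}_N$. Then the periodic auto-correlation $\theta(d)$ of the interleaved sequence $\mathbf{s}\circ\pi$ satisfies $\theta(d)=0$ for every $0<d<N$ with $q_i^{n_i}\nmid d$.
   Context: $\xi_N=e^{-2\pi\sqrt{-1}/N}$, $\xi_N^{x/2}=e^{-\pi\sqrt{-1}x/N}$. A Zadoff–Chu sequence of length $N$ is $s(k)=\xi_N^{u(k^2+(N\bmod2)k+2lk)/2}$, $0\le k<N$, with $\gcd(u,N)=1$ and $l$ an integer. $(\mathbf{s}\circ\pi)(k)=s(\pi(k)\bmod N)$. The periodic auto-correlation of a length-$N$ sequence $\mathbf{y}$ is $\theta(d)=\sum_{k=0}^{N-1}y(k)y^*(k+d)$, indices mod $N$. *)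

(* Defs.v *)
From HB Require Import structures.
From mathcomp Require Import all_boot all_order all_algebra.
From mathcomp Require Import complex.
From mathcomp Require Import reals trigo.
Set Implicit Arguments. Unset Strict Implicit. Unset Printing Implicit Defensive.
Import Order.TTheory GRing.Theory Num.Theory.
Local Open Scope ring_scope.
Local Open Scope complex_scope.

(* xi_N^{1/2} = e^{-pi i / N} = cos(pi/N) - i sin(pi/N), so that
   xi_N^{x/2} = (halfxi N)^x for every integer x. *)
Definition halfxi (R : realType) (N : nat) : R[i] :=
  (cos (pi / N%:R)) -i* (sin (pi / N%:R)).

Definition zc_seq (R : realType) (N : nat) (u l : int) (k : nat) : R[i] :=
  halfxi R N ^ (u * ((k ^ 2)%:Z + (N %% 2)%:Z * k%:Z + 2 * l * k%:Z)).

Definition pi_map (N q : nat) (a b : int) (k : nat) : nat :=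
  `|(((k ^ q)%:Z + a * k%:Z + b) %% N%:Z)%Z|%N.

Definition permutes_ZN (N : nat) (f : nat -> nat) : Prop :=
  (forall k, (k < N)%N -> (f k < N)%N) /\
  (forall y, (y < N)%N -> exists! x, (x < N)%N /\ f x = y).

Definition interleave (R : realType) (N : nat) (s : nat -> R[i]) (p : nat -> nat)
  (k : nat) : R[i] := s (p k %% N)%N.

Definition autocorr (R : realType) (N : nat) (y : nat -> R[i]) (d : nat) : R[i] :=
  \sum_(k < N) y k * (y ((k + d) %% N)%N)^*.

(* Main.v *)
Require Import Defs.
From HB Require Import structures.
From mathcomp Require Import all_boot all_order all_algebra.
From mathcomp Require Import complex.
From mathcomp Require Import reals trigo.
From mathcomp Require Import ring lra zify.
Import Order.TTheory GRing.Theory Num.Theory.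
Local Open Scope ring_scope.

Module T1.
Local Open Scope ring_scope.
Local Open Scope complex_scope.
Set Implicit Arguments. Unset Strict Implicit.

Section Trig.
Variable R : realType.

Definition cis (t : R) : R[i] := cos t -i* sin t.

Lemma cisD x y : cis (x + y) = cis x * cis y.
Proof.
rewrite /cis cosD sinD; apply/eqP; rewrite eq_complex /=; apply/andP; split; apply/eqP; ring.
Qed.

Lemma cisX t n : cis t ^+ n = cis (n%:R * t).
Proof.
elim: n => [|n IH]; first by rewrite expr0 mul0r /cis cos0 sin0 oppr0.
by rewrite exprSr IH -cisD mulrSr mulrDl mul1r.
Qed.

Lemma cis_neq1 t : 0 < t < pi *+ 2 -> cis t != 1.
Proof.
move=> /andP[t0 t2]; apply/negP => /eqP[c1 s1].
have s0 : sin t = 0 by rewrite -[sin t]opprK s1 oppr0.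
case: (ltgtP t pi) => tp.
- have h : 0 < t < pi by rewrite t0 tp.
  by have := sin_gt0_pi h; rewrite s0 ltxx.
- have h : 0 < t - pi < pi.
    apply/andP; split; first by rewrite subr_gt0.
    by rewrite ltrBlDr -mulr2n.
  have := sin_gt0_pi h.
  have e : sin t = - sin (t - pi) by rewrite -sinDpi subrK.
  by rewrite -oppr_lt0 -e s0 ltxx.
- by move: c1; rewrite tp cospi; lra.
Qed.
End Trig.

End T1.
Import T1.

Module T2.
Local Open Scope ring_scope.
Local Open Scope complex_scope.
Set Implicit Arguments. Unset Strict Implicit.

Section H.
Variable R : realType.
Variable N : nat.
Hypothesis N0 : (0 < N)%N.
Local Notation h := (halfxi R N).

Lemma hE : h = cis (pi / N%:R). Proof. by []. Qed.

Lemma Nr0 : (N%:R : R) != 0. Proof. by rewrite pnatr_eq0 -lt0n. Qed.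

Lemma h_neq0 : h != 0.
Proof.
apply/negP => /eqP H.
have : h * (cos (pi / N%:R) +i* sin (pi / N%:R)) = 1.
  rewrite /halfxi; apply/eqP; rewrite eq_complex /=; apply/andP; split; apply/eqP.
    by rewrite -[in RHS](cos2Dsin2 (pi / N%:R)); ring.
  ring.
by rewrite H mul0r => /eqP; rewrite eq_sym oner_eq0.
Qed.

Lemma conj_h : h^* = h^-1.
Proof.
have e : h * h^* = 1.
  rewrite /halfxi; apply/eqP; rewrite eq_complex /=; apply/andP; split; apply/eqP.
    by rewrite -[in RHS](cos2Dsin2 (pi / N%:R)); ring.
  ring.
by rewrite -[h^*]mul1r -(mulVf h_neq0) -mulrA e mulr1.
Qed.

Lemma h2N : h ^+ (2 * N) = 1.
Proof.
rewrite hE cisX.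
have -> : ((2 * N)%N%:R * (pi / N%:R) : R) = pi *+ 2.
  by rewrite natrM mulr2n; field; exact: Nr0.
by rewrite /cis cos2pi sin2pi oppr0.
Qed.

Lemma hz_per (z w : int) : h ^ (z + (2 * N)%:Z * w) = h ^ z.
Proof.
rewrite expfzDr ?h_neq0 // -exprz_exp.
have -> : h ^ (2 * N)%N%:Z = 1 by rewrite -exprnP h2N.
by rewrite exp1rz mulr1.
Qed.

Lemma hz1 (z : int) : h ^ z = 1 -> (((2 * N)%N)%:Z %| z)%Z.
Proof.
move=> H.
have N2 : ((2 * N)%N%:Z) != 0 by rewrite eqz_nat muln_eq0 negb_or /= -lt0n N0.
have r0 := modz_ge0 z N2.
have r1 := ltz_mod z N2.
move: H; rewrite {1}(divz_eq z ((2 * N)%N%:Z)) addrC mulrC hz_per.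
rewrite -(gez0_abs r0) -exprnP hE cisX.
set r := `|(z %% (2 * N)%N%:Z)%Z|%N.
case: (posnP r) => [r00 _| rp].
  have z0 : (z %% (2 * N)%N%:Z)%Z = 0 by rewrite -(gez0_abs r0) -/r r00.
  by apply/dvdzP; exists (z %/ (2 * N)%N%:Z)%Z; rewrite {1}(divz_eq z ((2 * N)%N%:Z)) z0 addr0.
move=> /eqP; rewrite (negbTE (cis_neq1 _)) //.
apply/andP; split.
  by rewrite mulr_gt0 ?ltr0n // divr_gt0 ?pi_gt0 // ltr0n.
have rl : (r < 2 * N)%N by rewrite -ltz_nat /r gez0_abs.
rewrite mulrA ltr_pdivrMr ?ltr0n // mulrC -mulr_natr mul1r.
have : (r%:R : R) < 2%:R * N%:R by rewrite -natrM ltr_nat.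
have := pi_gt0 R; rewrite mulr2n; nra.
Qed.
End H.

End T2.
Import T2.

Module T3.
Local Open Scope ring_scope.
Set Implicit Arguments. Unset Strict Implicit.

Section Ints.
Variable q : nat.
Hypothesis pq : prime q.

Definition W (k x : int) : int :=
  \sum_(j < q.-1) ('C(q, j.+1) %/ q)%N%:Z * k ^+ (q - j.+1) * x ^+ j.

Lemma W1 k x : (k + x) ^+ q = k ^+ q + x ^+ q + q%:Z * x * W k x.
Proof.
have q0 := prime_gt0 pq.
rewrite /W exprDn; move: (q0); case E: q => [//|p] _.
rewrite big_ord_recl big_ord_recr /= subn0 subnn expr0 mulr1 mul1r bin0 binn !mulr1n.
rewrite -addrA; congr (_ + _).
have -> : bump 0 p = p.+1 by rewrite /bump add1n.
rewrite addrC; congr (_ + _).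
rewrite mulr_sumr; apply: eq_bigr => i _.
have hd : (q %| 'C(q, i.+1))%N.
  apply: prime_dvd_bin => //; apply/andP; split => //.
  by rewrite E; have := ltn_ord i; lia.
have -> : bump 0 i = i.+1 by rewrite /bump add1n.
rewrite -E -[in LHS](divnK hd) -mulr_natr natz PoszM.
rewrite exprS; ring.
Qed.

Lemma dvd_powD (x m t : int) n : (m %| (x + m * t) ^+ n - x ^+ n)%Z.
Proof.
rewrite subrXX addrAC subrr add0r; apply: dvdz_mulr; apply: dvdz_mulr; exact: dvdzz.
Qed.

Lemma W2 (k m x : int) : (m %| W (k + m) x - W k x)%Z.
Proof.
rewrite /W -sumrB; apply: rpred_sum => j _.
have -> : forall c u v w : int, c * u * w - c * v * w = c * w * (u - v) by move=> *; ring.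
apply: dvdz_mull; have := dvd_powD k m 1 (q - j.+1); by rewrite mulr1.
Qed.

Variables (a b : int).
Definition P (x : int) : int := x ^+ q + a * x + b.

Lemma PD x y : P (x + y) - P x = y * (y ^+ q.-1 + a + q%:Z * W x y).
Proof.
have e : y ^+ q = y * y ^+ q.-1 by rewrite -exprS prednK // prime_gt0.
rewrite /P W1 e; ring.
Qed.

Variables (N d m d' : nat).
Hypothesis hmd : (m * d * q = N * d')%N.
Definition K : int := (d%:Z ^+ q.-1 + a) * (m%:Z ^+ q.-1 + a).

Lemma hmdZ : m%:Z * d%:Z * q%:Z = N%:Z * d'%:Z.
Proof. by rewrite -!PoszM hmd. Qed.

Lemma I2 x : exists s, (P (x + m%:Z) - P x) * (P (x + d%:Z) - P x) = m%:Z * d%:Z * K + N%:Z * s.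
Proof.
rewrite !PD /K.
set A := W x m; set B := W x d.
exists (d'%:Z * (A * (d%:Z ^+ q.-1 + a) + B * (m%:Z ^+ q.-1 + a) + q%:Z * A * B)).
rewrite [N%:Z * _]mulrA -hmdZ; ring.
Qed.

Lemma I1 x : exists r, P (x + m%:Z + d%:Z) = P (x + d%:Z) + (P (x + m%:Z) - P x) + N%:Z * r.
Proof.
have [w hw] := dvdzP (W2 x m%:Z d%:Z).
exists (d'%:Z * w).
have e1 := PD (x + m%:Z) d%:Z.
have e2 := PD x d%:Z.
have e3 : P (x + m%:Z + d%:Z) = P (x + m%:Z) + d%:Z * (d%:Z ^+ q.-1 + a + q%:Z * W (x + m%:Z) d%:Z).
  by rewrite -e1; ring.
have e4 : P (x + d%:Z) = P x + d%:Z * (d%:Z ^+ q.-1 + a + q%:Z * W x d%:Z).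
  by rewrite -e2; ring.
rewrite e3 e4.
have e5 : W (x + m%:Z) d%:Z = W x d%:Z + w * m%:Z by rewrite -hw; ring.
rewrite e5 [N%:Z * _]mulrA -hmdZ; ring.
Qed.
End Ints.

End T3.
Import T3.

Module T4.
Local Open Scope ring_scope.
Local Open Scope complex_scope.
Set Implicit Arguments. Unset Strict Implicit.

Section Z.
Variable R : realType.
Variables (N : nat) (u l : int).
Hypothesis N0 : (0 < N)%N.
Local Notation h := (halfxi R N).
Definition cc : int := (N %% 2)%N%:Z + 2 * l.
Definition F (x : int) : int := x ^+ 2 + cc * x.
Definition Zf (x : int) : R[i] := h ^ (u * F x).

Lemma Zf_step x : Zf (x + N%:Z) = Zf x.
Proof.
rewrite /Zf.
have eN : N%:Z = 2 * (N %/ 2)%N%:Z + (N %% 2)%N%:Z.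
  by rewrite {1}(divn_eq N 2) PoszD PoszM mulrC.
have -> : u * F (x + N%:Z) = u * F x + (2 * N)%N%:Z * (u * (x + (N %/ 2)%N%:Z + (N %% 2)%N%:Z + l)).
  rewrite /F /cc PoszM.
  set n2 := (N %/ 2)%N%:Z; set r2 := (N %% 2)%N%:Z.
  rewrite eN -/n2 -/r2; ring.
exact: hz_per.
Qed.

Lemma Zf_per x (t : int) : Zf (x + N%:Z * t) = Zf x.
Proof.
have pos : forall y (n : nat), Zf (y + N%:Z * n%:Z) = Zf y.
  move=> y; elim=> [|n IH]; first by rewrite mulr0 addr0.
  by rewrite -[n.+1]addn1 PoszD mulrDr mulr1 addrA Zf_step IH.
case: t => n; first exact: pos.
rewrite NegzE.
by rewrite -[LHS](pos _ n.+1) mulrN subrK.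
Qed.

Lemma Zf_mod x y : (N%:Z %| x - y)%Z -> Zf x = Zf y.
Proof.
move=> /dvdzP[t ht].
have -> : x = y + N%:Z * t by rewrite mulrC -ht; ring.
exact: Zf_per.
Qed.

Lemma Zconj x y : Zf x * (Zf y)^* = h ^ (u * (F x - F y)).
Proof.
rewrite /Zf fmorphXz [X in X ^ (u * F y)](_ : _ = h^-1); last exact: conj_h.
rewrite exprz_inv -expfzDr ?h_neq0 //; congr (_ ^ _); ring.
Qed.
End Z.

End T4.
Import T4.

Module T5.
Local Open Scope ring_scope.
Set Implicit Arguments. Unset Strict Implicit.

Section NT.
Variable q : nat.
Hypothesis pq : prime q.

Lemma EuclidZ (x y : int) : (q%:Z %| x * y)%Z -> (q%:Z %| x)%Z \/ (q%:Z %| y)%Z.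
Proof. by rewrite !dvdzE abszM Euclid_dvdM // => /orP. Qed.

Lemma not_dvd1 : ~ (q%:Z %| 1)%Z.
Proof. by rewrite dvdzE /= dvdn1 => /eqP e; move: pq; rewrite e. Qed.

Lemma fermat_z (x : nat) : (q%:Z %| x%:Z ^+ q - x%:Z)%Z.
Proof.
rewrite -eqz_mod_dvd; apply/eqP.
have e : ((x ^ q)%N%:Z) = x%:Z ^+ q by rewrite -[LHS]natz natrX natz.
by rewrite -e !modz_nat fermat_little.
Qed.

Lemma dvdX (x : int) : (q%:Z %| x)%Z -> (q%:Z %| x ^+ q.-1)%Z.
Proof.
move=> H; have q1 := prime_gt1 pq.
by rewrite -(prednK (n := q.-1)) ?exprS ?dvdz_mulr //; lia.
Qed.

Lemma factor_ndvd (a : int) (M x : nat) :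
  ~ (q%:Z %| 1 + a)%Z -> ((q %| M)%N -> ~ (q%:Z %| a)%Z) ->
  ((q %| x)%N -> (q %| M)%N) -> ~ (q%:Z %| x%:Z ^+ q.-1 + a)%Z.
Proof.
move=> H1 H2 Hx Hd.
case: (boolP (q %| x)%N) => qx.
  apply: (H2 (Hx qx)).
  have := dvdX (x := x%:Z); rewrite dvdzE /= qx => /(_ isT) h1.
  by rewrite -(rpredDl a h1).
have cx : coprimez q%:Z x%:Z by rewrite coprimezE /= prime_coprime.
have := fermat_z x.
have -> : x%:Z ^+ q - x%:Z = (x%:Z ^+ q.-1 - 1) * x%:Z.
  by rewrite -{1}(prednK (prime_gt0 pq)) exprS; ring.
rewrite Gauss_dvdzl // => h1.
apply: H1; have -> : 1 + a = (x%:Z ^+ q.-1 + a) - (x%:Z ^+ q.-1 - 1) by ring.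
exact: rpredB.
Qed.
End NT.

End T5.
Import T5.

Module T6.
Local Open Scope ring_scope.
Set Implicit Arguments. Unset Strict Implicit.

Section Perm.
Variables (N q : nat) (a b : int).
Hypothesis N0 : (0 < N)%N.
Hypothesis pq : prime q.
Hypothesis qN : (q %| N)%N.
Hypothesis perm : permutes_ZN N (pi_map N q a b).

Lemma pi_mapE k : pi_map N q a b k = `|(P q a b k%:Z %% N%:Z)%Z|%N.
Proof.
have e : ((k ^ q)%N%:Z) = k%:Z ^+ q by rewrite -[LHS]natz natrX natz.
by rewrite /pi_map /P e.
Qed.

Lemma NZ0 : N%:Z != 0. Proof. by rewrite eqz_nat -lt0n. Qed.

Lemma pi_map_eq x y : (N%:Z %| P q a b x%:Z - y)%Z ->
  pi_map N q a b x = `|(y %% N%:Z)%Z|%N.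
Proof.
move=> H; rewrite pi_mapE; congr (absz _); apply/eqP; by rewrite eqz_mod_dvd.
Qed.

Lemma mod_inj x y : `|(x %% N%:Z)%Z|%N = `|(y %% N%:Z)%Z|%N ->
  (N%:Z %| x - y)%Z.
Proof.
move=> e; rewrite -eqz_mod_dvd; apply/eqP.
by rewrite -(gez0_abs (modz_ge0 x NZ0)) -(gez0_abs (modz_ge0 y NZ0)) e.
Qed.

Lemma HA1 : ~ (q%:Z %| 1 + a)%Z.
Proof.
move=> H.
have yl : (`|((b + 1) %% N%:Z)%Z|%N < N)%N.
  by rewrite -ltz_nat gez0_abs ?modz_ge0 ?NZ0 //; have := ltz_mod (b + 1) NZ0.
have [x [[xl xe] _]] := perm.2 _ yl.
rewrite pi_mapE in xe.
have e1 := mod_inj xe.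
have e2 : (q%:Z %| P q a b x%:Z - (b + 1))%Z.
  by apply: dvdz_trans e1; rewrite dvdzE.
have e3 : (q%:Z %| P q a b x%:Z - b)%Z.
  have -> : P q a b x%:Z - b = (x%:Z ^+ q - x%:Z) + (1 + a) * x%:Z by rewrite /P; ring.
  by rewrite rpredD ?fermat_z // dvdz_mulr.
apply: (not_dvd1 pq).
have := rpredB e3 e2.
by have -> : (P q a b x%:Z - b) - (P q a b x%:Z - (b + 1)) = 1 by ring.
Qed.

Lemma HA2 : (q %| N %/ q)%N -> ~ (q%:Z %| a)%Z.
Proof.
move=> h1 h2.
set m1 := (N %/ q)%N.
have q1 := prime_gt1 pq.
have m10 : (0 < m1)%N by rewrite divn_gt0 ?prime_gt0 // dvdn_leq.
have m1N : (m1 < N)%N by rewrite ltn_Pdiv.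
have hN : (N%:Z %| P q a b m1%:Z - P q a b 0)%Z.
  have := PD pq a b 0 m1%:Z; rewrite add0r => ->.
  have -> : N%:Z = m1%:Z * q%:Z by rewrite -PoszM divnK.
  apply: dvdz_mul; first exact: dvdzz.
  apply: rpredD; last by apply: dvdz_mulr; exact: dvdzz.
  apply: rpredD => //.
  by apply: dvdX => //; rewrite dvdzE.
have e : pi_map N q a b m1 = pi_map N q a b 0.
  by rewrite (pi_map_eq hN) pi_mapE.
have [y [_ uy]] := perm.2 _ (perm.1 0 N0).
have := uy m1 (conj m1N e); have := uy 0 (conj N0 erefl).
by move=> e0 e1; move: m10; rewrite -e1 e0.
Qed.
End Perm.

End T6.
Import T6.

Module T7.
Local Open Scope ring_scope.
Local Open Scope complex_scope.
Set Implicit Arguments. Unset Strict Implicit.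

Lemma sum_rot1 (V : zmodType) (f : nat -> V) N :
  \sum_(k < N) f ((k + 1) %% N)%N = \sum_(k < N) f k.
Proof.
case: N => [|n]; first by rewrite !big_ord0.
rewrite big_ord_recr big_ord_recl /= addn1 modnn addrC; congr (_ + _).
by apply: eq_bigr => i _; rewrite /bump /= add1n addn1 modn_small // ltnS.
Qed.

Lemma sum_rot (V : zmodType) (f : nat -> V) N m :
  \sum_(k < N) f ((k + m) %% N)%N = \sum_(k < N) f k.
Proof.
elim: m f => [|m IH] f.
  case: N => [|n]; first by rewrite !big_ord0.
  by apply: eq_bigr => i _; rewrite addn0 modn_small.
rewrite -(IH f) -(sum_rot1 (fun k => f ((k + m) %% N)%N)).
by apply: eq_bigr => i _; rewrite modnDml -addnA add1n addnS.
Qed.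

Section Main.
Variable R : realType.
Variables (N : nat) (u l : int) (q : nat) (a b : int) (d m d' : nat).
Hypothesis N0 : (0 < N)%N.
Hypothesis pq : prime q.
Hypothesis hmd : (m * d * q = N * d')%N.
Hypothesis hK : ~ (q%:Z %| u * K q a d m * d'%:Z)%Z.
Local Notation h := (halfxi R N).
Local Notation PP := (P q a b).
Local Notation Z := (Zf R N u l).

Definition Tz (x : int) : R[i] := Z (PP x) * (Z (PP (x + d%:Z)))^*.

Lemma Pmod x t : (N%:Z %| PP (x + N%:Z * t) - PP x)%Z.
Proof.
have -> : PP (x + N%:Z * t) - PP x = ((x + N%:Z * t) ^+ q - x ^+ q) + a * t * N%:Z.
  by rewrite /P; ring.
by apply: rpredD; [exact: dvd_powD | apply: dvdz_mull; exact: dvdzz].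
Qed.

Lemma Tz_per x t : Tz (x + N%:Z * t) = Tz x.
Proof.
rewrite /Tz (Zf_mod _ _ _ N0 (Pmod x t)); congr (_ * _ ^*).
apply: Zf_mod => //; rewrite [x + _ + _]addrAC; exact: Pmod.
Qed.

Definition zeta : R[i] := h ^ (- (2 * u * m%:Z * d%:Z * K q a d m)).

Lemma Tz_shift x : Tz (x + m%:Z) = zeta * Tz x.
Proof.
have [r hr] := I1 pq a b hmd x.
have [s hs] := I2 pq a b hmd x.
set A := PP (x + m%:Z) - PP x in hr hs.
rewrite /Tz hr.
rewrite (Zf_mod _ _ _ N0 (x := PP (x + d%:Z) + A + N%:Z * r) (y := PP (x + d%:Z) + A)); last first.
  by rewrite addrAC subrr add0r; apply: dvdz_mulr; exact: dvdzz.
have -> : PP (x + m%:Z) = PP x + A by rewrite /A; ring.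
rewrite /zeta !Zconj -expfzDr ?h_neq0 //.
set X := PP x; set Y := PP (x + d%:Z).
have e : u * (F N l (X + A) - F N l (Y + A)) =
  (- (2 * u * m%:Z * d%:Z * K q a d m) + u * (F N l X - F N l Y)) + (2 * N)%N%:Z * (- (u * s)).
  have e2 : A * (Y - X) = m%:Z * d%:Z * K q a d m + N%:Z * s by rewrite -hs.
  rewrite PoszM /F.
  transitivity (u * (X ^+ 2 + cc N l * X - (Y ^+ 2 + cc N l * Y)) - 2 * u * (A * (Y - X))); first by ring.
  rewrite e2; ring.
by rewrite e hz_per.
Qed.

Lemma zeta_neq1 : zeta != 1.
Proof.
apply/negP => /eqP /(hz1 N0) /dvdzP [t ht].
apply: hK; apply/dvdzP; exists (- t).
have NZ : N%:Z != 0 by rewrite eqz_nat -lt0n.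
apply: (mulIf NZ).
have : 2 * (u * K q a d m * d'%:Z * N%:Z) = 2 * (- t * q%:Z * N%:Z).
  have e1 : u * K q a d m * d'%:Z * N%:Z = u * K q a d m * (m%:Z * d%:Z * q%:Z).
    by rewrite (hmdZ hmd); ring.
  rewrite e1.
  transitivity (- (- (2 * u * m%:Z * d%:Z * K q a d m)) * q%:Z); first by ring.
  by rewrite ht PoszM; ring.
have h2 : (2 : int) != 0 by [].
move=> /(mulfI h2) ->; ring.
Qed.
End Main.

End T7.
Import T7.

Module T8.
Local Open Scope ring_scope.

Lemma zcE (R : realType) N u l n : zc_seq R N u l n = Zf R N u l n%:Z.
Proof.
rewrite /zc_seq /Zf /F /cc; congr (_ ^ (u * _)).
have e : ((n ^ 2)%N%:Z) = n%:Z ^+ 2 by rewrite -[LHS]natz natrX natz.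
by rewrite e; ring.
Qed.

Lemma pi_lt N q a b j : (0 < N)%N -> (pi_map N q a b j < N)%N.
Proof.
move=> N0; have NZ : N%:Z != 0 by rewrite eqz_nat -lt0n.
rewrite pi_mapE -ltz_nat gez0_abs ?modz_ge0 //.
by have := ltz_mod (P q a b j%:Z) NZ.
Qed.

Lemma yE (R : realType) N u l q a b j : (0 < N)%N ->
  zc_seq R N u l (pi_map N q a b j %% N)%N = Zf R N u l (P q a b j%:Z).
Proof.
move=> N0; have NZ : N%:Z != 0 by rewrite eqz_nat -lt0n.
rewrite modn_small ?pi_lt // zcE pi_mapE gez0_abs ?modz_ge0 //.
apply: Zf_mod => //.
apply/dvdzP; exists (- (P q a b j%:Z %/ N%:Z)%Z).
rewrite {2}(divz_eq (P q a b j%:Z) N%:Z); ring.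
Qed.

Lemma modZ (k N : nat) : ((k %% N)%N%:Z) = k%:Z + N%:Z * (- (k %/ N)%N%:Z).
Proof. rewrite {2}(divn_eq k N) PoszD PoszM; ring. Qed.


End T8.
Import T8.

Theorem proposition1 (R : realType) (N : nat) (u l : int) (q : nat) (a b : int)
  (d : nat) :
  (0 < N)%N -> prime q -> (q %| N)%N ->
  coprimez u N%:Z ->
  permutes_ZN N (pi_map N q a b) ->
  (0 < d)%N -> (d < N)%N -> ~~ (q ^ logn q N %| d)%N ->
  autocorr N (interleave N (zc_seq R N u l) (pi_map N q a b)) d = 0.
Proof.
move=> N0 pq qN cop perm d0 dN ndvd.
set e := logn q d.
have [d' cd' hd] := pfactor_coprime pq d0.
rewrite -/e in hd.
have q0 := prime_gt0 pq.
have el : (e < logn q N)%N.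
  rewrite ltnNge; apply/negP => le; move/negP: ndvd; apply.
  apply: dvdn_trans (dvdn_exp2l q le) _; rewrite hd; exact: dvdn_mull.
have hqe : (q ^ e.+1 %| N)%N by rewrite pfactor_dvdn.
set m := (N %/ q ^ e.+1)%N.
have hm : (m * q ^ e.+1)%N = N by rewrite divnK.
have hmd : (m * d * q = N * d')%N by rewrite -hm hd expnSr; ring.
have hNq : (N %/ q = m * q ^ e)%N by rewrite -hm expnSr mulnA mulnK.
have H1 := HA1 N0 pq qN perm.
have H2 := HA2 N0 pq qN perm.
have hK : ~ (q%:Z %| u * K q a d m * d'%:Z)%Z.
  move=> /(EuclidZ pq) [|].
    move=> /(EuclidZ pq) [|].
      move=> qu; move: cop; rewrite coprimezE /= => cop.
      have : (q %| gcdn `|u| N)%N by rewrite dvdn_gcd qN andbT; move: qu; rewrite dvdzE.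
      by rewrite (eqP cop) dvdn1 => /eqP q1; move: pq; rewrite q1.
    rewrite /K => /(EuclidZ pq) [].
      apply: (factor_ndvd pq H1 H2) => qd; rewrite hNq.
      have e0 : (0 < e)%N.
        rewrite lt0n; apply/negP => /eqP e0; move: cd'.
        by rewrite prime_coprime // -(muln1 d') -(expn0 q) -e0 -hd qd.
      by apply: dvdn_mull; rewrite -(prednK e0) expnS dvdn_mulr.
    apply: (factor_ndvd pq H1 H2) => qm; rewrite hNq; exact: dvdn_mulr.
  by rewrite dvdzE /= => qd; move: cd'; rewrite prime_coprime // qd.
rewrite /autocorr /interleave.
set f := fun k : nat => Tz R N u l q a b d k%:Z.
have -> : \sum_(k < N) zc_seq R N u l (pi_map N q a b k %% N) *
    (zc_seq R N u l (pi_map N q a b ((k + d) %% N) %% N))^* = \sum_(k < N) f k.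
  apply: eq_bigr => k _; rewrite !yE // /f /Tz; congr (_ * _ ^*).
  apply: Zf_mod => //; rewrite modZ PoszD.
  exact: Pmod.
have zs : \sum_(k < N) f k = zeta R N u q a d m * \sum_(k < N) f k.
  rewrite -[in LHS](sum_rot f N m) mulr_sumr; apply: eq_bigr => k _.
  by rewrite /f modZ Tz_per // PoszD (Tz_shift _ _ _ _ _ N0 pq hmd).
have zn := zeta_neq1 R N0 hmd hK.
move: zs; set S := \sum_(k < N) f k => zs.
have : (1 - zeta R N u q a d m) * S = 0 by rewrite mulrBl mul1r -zs subrr.
by move/eqP; rewrite mulf_eq0 subr_eq0 eq_sym (negbTE zn) /= => /eqP.
Qed.
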